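(* Let $C=(C_{i,j})$ be an $m\times n$ evolutionary stable (ES) configuration, where $n$ is divisible by $3$. Suppose that for some row index $i$ with $i+2\le m$, row $i+2$ is the string $101\,101\cdots101$ (i.e.\ $C_{i+2,l}=0$ if $l\equiv 2\pmod 3$ and $C_{i+2,l}=1$ otherwise, for all $1\le l\le n$). Then $C_{i,j}=0$ for every $j$ with $C_{i+2,j}=0$; that is, there is no $j$ with $C_{i+2,j}=0$ and $C_{i,j}=1$.
   Context: An $m\times n$ configuration is a $0$-$1$ matrix $C=(C_{i,j})$, $1\le i\le m$, $1\le j\le n$; $C_{i,j}=1$ means lot $(i,j)$ is occupied by a house. Row $1$ is the northernmost, row $m$ the southernmost; column $1$ westernmost, column $n$ easternmost. A house at $(i,j)$ is blocked from sunlight if the three lots $(i,j-1)$, $(i,j+1)$, $(i+1,j)$ all lie inside the grid and are all occupied (lots outside the grid never obstruct sunlight). $C$ is permissible if no house is blocked, and maximal if it is permissible and setting any single empty lot to $1$ yields a non-permissible configuration. A maximal configuration is resistant to predators if, for every empty lot, putting a house on it results in that new house being blocked; it is resistant to altruists if, for every empty lot, putting a house on it results in some other (already existing) house being blocked. An ES configuration is a maximal configuration resistant to both predators and altruists. *)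

(* Defs.v *)
From mathcomp Require Import all_boot.
Set Implicit Arguments. Unset Strict Implicit. Unset Printing Implicit Defensive.

(* An m x n configuration: C i j for 1 <= i <= m, 1 <= j <= n (1-based);
   values outside the grid are never inspected. *)
Definition config := nat -> nat -> bool.

Definition in_grid (m n i j : nat) : bool := (1 <= i <= m) && (1 <= j <= n).

Definition blocked (m n : nat) (C : config) (i j : nat) : bool :=
  [&& C i j, 2 <= j, j + 1 <= n, i + 1 <= m,
      C i (j - 1), C i (j + 1) & C (i + 1) j].

Definition permissible (m n : nat) (C : config) : Prop :=
  forall i j, in_grid m n i j -> ~~ blocked m n C i j.

Definition add_house (C : config) (a b : nat) : config :=
  fun i j => ((i == a) && (j == b)) || C i j.

Definition maximal (m n : nat) (C : config) : Prop :=
  permissible m n C /\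
  forall a b, in_grid m n a b -> ~~ C a b -> ~ permissible m n (add_house C a b).

Definition resistant_predators (m n : nat) (C : config) : Prop :=
  forall a b, in_grid m n a b -> ~~ C a b -> blocked m n (add_house C a b) a b.

Definition resistant_altruists (m n : nat) (C : config) : Prop :=
  forall a b, in_grid m n a b -> ~~ C a b ->
    exists i j, [/\ in_grid m n i j, (i, j) <> (a, b), C i j &
                    blocked m n (add_house C a b) i j].

Definition ES (m n : nat) (C : config) : Prop :=
  [/\ maximal m n C, resistant_predators m n C & resistant_altruists m n C].

(* Main.v *)
Require Import Defs.
From Stdlib Require Import Classical_Prop.
From mathcomp Require Import all_boot zify.
Set Implicit Arguments. Unset Strict Implicit. Unset Printing Implicit Defensive.

Lemma blockedP m n (C : config) i j :
  reflect (C i j /\ 2 <= j /\ j + 1 <= n /\ i + 1 <= m /\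
      C i (j - 1) /\ C i (j + 1) /\ C (i + 1) j) (blocked m n C i j).
Proof.
rewrite /blocked; apply: (iffP idP).
  by move=> /andP[-> /andP[-> /andP[-> /andP[-> /andP[-> /andP[-> ->]]]]]].
by case=> -> [-> [-> [-> [-> [-> ->]]]]].
Qed.

Lemma addE (C : config) a b i j : add_house C a b i j = ((i == a) && (j == b)) || C i j.
Proof. by []. Qed.

Lemma add_ne (C : config) a b i j : i <> a \/ j <> b -> add_house C a b i j = C i j.
Proof.
move=> h; rewrite addE; case: (i =P a) => [ia|//]; case: (j =P b) => [jb|//].
by exfalso; case: h.
Qed.

Section FromES.
Variables (m n : nat) (C : config).
Hypothesis HES : ES m n C.

Lemma ES_P1 r b : 1 <= r -> r + 1 <= m -> 1 <= b <= n -> C r b = false ->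
  [/\ 2 <= b, b + 1 <= n, C r (b-1), C r (b+1) & C (r+1) b].
Proof.
move=> r1 rm bb Cb; case: HES => _ pred _.
have g : in_grid m n r b by rewrite /in_grid bb andbT; apply/andP; split; lia.
have := pred r b g (negbT Cb) => /blockedP[_ [b2 [bn [_ [h1 [h2 h3]]]]]].
rewrite add_ne in h1; last by right; lia.
rewrite add_ne in h2; last by right; lia.
rewrite add_ne in h3; last by left; lia.
by split.
Qed.

Lemma ES_P2 r b : 1 <= r -> r + 1 <= m -> 2 <= b -> b + 1 <= n -> C r b -> C r (b-1) -> C r (b+1) -> C (r+1) b = false.
Proof.
move=> r1 rm b2 bn h0 h1 h2; case: HES => [[perm _] _ _].
have g : in_grid m n r b by rewrite /in_grid; apply/andP; split; apply/andP; split; lia.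
have := perm r b g; case E: (C (r+1) b) => //.
by move/negP; case; apply/blockedP; do !split.
Qed.

Lemma ES_P3 r b : 1 <= r -> r + 1 <= m -> 1 <= b <= n -> C r b = false ->
  [\/ 3 <= b /\ C r (b-2) /\ C (r+1) (b-1),
      b + 2 <= n /\ C r (b+2) /\ C (r+1) (b+1) |
      2 <= r /\ C (r-1) (b-1) /\ C (r-1) b /\ C (r-1) (b+1)].
Proof.
move=> r1 rm bb Cb; case: HES => [[perm _] _ alt].
have g : in_grid m n r b by rewrite /in_grid bb andbT; apply/andP; split; lia.
have [i [j [gij neq Cij /blockedP[h0 [j2 [jn [im [h1 [h2 h3]]]]]]]]] := alt r b g (negbT Cb).
move: gij; rewrite /in_grid => /andP[/andP[i1 im'] /andP[j1 jn']].
case: (i =P r) => [ir|ir].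
- subst i.
  case: (j =P b+1) => [jb|jb].
  + subst j. constructor 2.
    rewrite add_ne in h2; last by right; lia.
    rewrite add_ne in h3; last by left; lia.
    have -> : b + 2 = b + 1 + 1 by lia.
    split; [lia | by []].
  case: (j + 1 =P b) => [jb'|jb'].
  + constructor 1.
    rewrite add_ne in h1; last by right; lia.
    rewrite add_ne in h3; last by left; lia.
    have e1 : b - 2 = j - 1 by lia.
    have e2 : b - 1 = j by lia.
    rewrite e1 e2; split; [lia | by []].
  + exfalso.
    rewrite add_ne in h0; last by right => e; apply: neq; rewrite e.
    rewrite add_ne in h1; last by right; lia.
    rewrite add_ne in h2; last by right; lia.
    rewrite add_ne in h3; last by left; lia.
    have gg : in_grid m n r j by rewrite /in_grid; apply/andP; split; apply/andP; split; lia.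
    by move: (perm r j gg) => /negP; apply; apply/blockedP; do !split.
- case: (i + 1 =P r) => [ir1|ir1]; case: (j =P b) => [jb|jb].
  + subst j. constructor 3.
    rewrite add_ne in h0; last by left.
    rewrite add_ne in h1; last by left.
    rewrite add_ne in h2; last by left.
    have e : i = r - 1 by lia.
    rewrite -e; split; [lia | by []].
  + exfalso.
    rewrite add_ne in h0; last by left.
    rewrite add_ne in h1; last by left.
    rewrite add_ne in h2; last by left.
    rewrite add_ne in h3; last by right.
    have gg : in_grid m n i j by rewrite /in_grid; apply/andP; split; apply/andP; split; lia.
    by move: (perm i j gg) => /negP; apply; apply/blockedP; do !split.
  + exfalso.
    rewrite add_ne in h0; last by left.
    rewrite add_ne in h1; last by left.
    rewrite add_ne in h2; last by left.
    rewrite add_ne in h3; last by left.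
    have gg : in_grid m n i j by rewrite /in_grid; apply/andP; split; apply/andP; split; lia.
    by move: (perm i j gg) => /negP; apply; apply/blockedP; do !split.
  + exfalso.
    rewrite add_ne in h0; last by left.
    rewrite add_ne in h1; last by left.
    rewrite add_ne in h2; last by left.
    rewrite add_ne in h3; last by left.
    have gg : in_grid m n i j by rewrite /in_grid; apply/andP; split; apply/andP; split; lia.
    by move: (perm i j gg) => /negP; apply; apply/blockedP; do !split.
Qed.
End FromES.


Fixpoint cnt (f : nat -> bool) (y : nat) : nat :=
  if y is y'.+1 then cnt f y' + ~~ f y'.+1 else 0.

Arguments cnt : simpl never.

Lemma cnt0 f : cnt f 0 = 0.
Proof. by []. Qed.

Lemma cntS f y : cnt f y.+1 = cnt f y + ~~ f y.+1.
Proof. by []. Qed.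

Lemma cnt_mono (f : nat -> bool) x y : x <= y -> cnt f x <= cnt f y.
Proof.
elim: y => [|y IH]; first by rewrite leqn0 => /eqP ->.
rewrite leq_eqVlt => /orP[/eqP -> //|]; rewrite ltnS => /IH h.
rewrite cntS; lia.
Qed.

Lemma cnt_ge (f : nat -> bool) x z y : x < z <= y -> f z = false -> cnt f x + 1 <= cnt f y.
Proof.
move=> /andP[xz zy] fz.
have h1 : cnt f x <= cnt f z.-1 by apply: cnt_mono; lia.
have h2 : cnt f z <= cnt f y by apply: cnt_mono.
have e : z = z.-1.+1 by lia.
move: h2; rewrite e cntS -e fz /=; lia.
Qed.

Lemma cnt_const (f : nat -> bool) x y : x <= y -> (forall z, x < z <= y -> f z) -> cnt f y = cnt f x.
Proof.
elim: y => [|y IH]; first by rewrite leqn0 => /eqP ->.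
rewrite leq_eqVlt => /orP[/eqP -> //|]; rewrite ltnS => xy h.
rewrite cntS IH //; last by move=> z /andP[a b]; apply: h; lia.
by rewrite h //; lia.
Qed.

Lemma cnt_le1 (f : nat -> bool) x y : x <= y ->
  (forall z z', x < z -> z < z' -> z' <= y -> f z = false -> f z' = false -> False) ->
  cnt f y <= cnt f x + 1.
Proof.
elim: y => [|y IH]; first by rewrite leqn0 => /eqP ->; lia.
rewrite leq_eqVlt => /orP[/eqP -> //|]; first by lia.
rewrite ltnS => xy h.
case E: (f y.+1).
- rewrite cntS E /=; rewrite addn0; apply: IH => // z z' a b c; apply: h => //; lia.
- rewrite cntS E /=.
  rewrite (@cnt_const f x y) //=.
  move=> z /andP[a b]; case F: (f z) => //; exfalso.
  by apply: (h z y.+1) => //; lia.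
Qed.

Lemma last_false (f : nat -> bool) y : (exists z, 1 <= z < y /\ f z = false) ->
  exists z, [/\ 1 <= z < y, f z = false & forall w, z < w < y -> f w].
Proof.
elim: y => [|y IH]; first by case=> z [h _]; lia.
move=> [z [hz fz]].
case E: (f y).
- have [|z' [h1 h2 h3]] := IH.
  + exists z; split => //. case: (z =P y) => [ezy|nzy]; first by rewrite ezy E in fz.
    lia.
  + exists z'; split => //; first lia.
    move=> w hw; case: (w =P y) => [->//|nw]; apply: h3; lia.
- exists y; split => //; last by move=> w; lia.
  have : y <> 0 by move=> e; rewrite e in E; lia.
  lia.
Qed.

Ltac clr := repeat match goal with
  | H : ?T |- _ => lazymatch T with
      | is_true (_ <= _) => fail
      | (_ = _ :> nat) => fail
      | _ => clear H
      end
  end.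
Ltac slia := clr; lia.

Section Dens.
Variables (m n : nat) (D : config).
Hypothesis P1 : forall r b, 1 <= r -> r + 1 <= m -> 1 <= b <= n -> D r b = false ->
  [/\ 2 <= b, b + 1 <= n, D r (b-1), D r (b+1) & D (r+1) b].
Hypothesis P2 : forall r b, 1 <= r -> r + 1 <= m -> 2 <= b -> b + 1 <= n ->
  D r b -> D r (b-1) -> D r (b+1) -> D (r+1) b = false.
Hypothesis P3 : forall r b, 1 <= r -> r + 1 <= m -> 1 <= b <= n -> D r b = false ->
  [\/ 3 <= b /\ D r (b-2) /\ D (r+1) (b-1),
      b + 2 <= n /\ D r (b+2) /\ D (r+1) (b+1) |
      2 <= r /\ D (r-1) (b-1) /\ D (r-1) b /\ D (r-1) (b+1)].

Lemma full_above r b : 1 <= r -> r + 1 <= m -> 1 <= b <= n -> D (r+1) b = false -> D r b.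
Proof.
move=> r1 rm bb h; case E: (D r b) => //.
by have [_ _ _ _] := P1 r1 rm bb E; rewrite h.
Qed.

Lemma upper_gap r c c' : 1 <= r -> r + 2 <= m -> c < c' -> c' <= n ->
  (c = 0 /\ 3 <= c') \/ (1 <= c /\ D (r+1) c = false) -> D (r+1) c' = false ->
  exists z, c < z < c' /\ D r z = false.
Proof.
move=> r1 rm cc cn hc hc'.
case: (Classical_Prop.classic (exists z, c < z < c' /\ D r z = false)) => // H; exfalso.
have Hall : forall z, c < z < c' -> D r z.
  by move=> z hz; case E: (D r z) => //; case: H; exists z.
have r1' : 1 <= r + 1 by lia.
have rm' : r + 1 + 1 <= m by lia.
have c'b : 1 <= c' <= n by apply/andP; split; lia.
have [c'2 _ Yc'1 _ _] := P1 r1' rm' c'b hc'.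
have [c'3 c'c] : 3 <= c' /\ c + 2 <= c'.
  case: hc => [[c0 h3]|[c1 Yc]]; first by split; lia.
  have cb : 1 <= c <= n by apply/andP; split; lia.
  have [c2 _ _ Yc1 _] := P1 r1' rm' cb Yc.
  case: (c' =P c + 1) => [e|ne]; first by rewrite -e hc' in Yc1.
  split; lia.
have Az : D r (c' - 1) by apply: Hall; apply/andP; split; lia.
have Az1 : D r (c' - 1 - 1).
  case: (c' - 1 - 1 =P c) => [e|ne].
  - rewrite e; case: hc => [[c0 _]|[c1 Yc]]; first by lia.
    apply: full_above => //; [lia | apply/andP; split; lia].
  - apply: Hall; apply/andP; split; lia.
have Az2 : D r (c' - 1 + 1).
  have -> : c' - 1 + 1 = c' by lia.
  apply: full_above => //; lia.
have rm1 : r + 1 <= m by lia.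
have h2 : 2 <= c' - 1 by lia.
have h3 : c' - 1 + 1 <= n by lia.
have := P2 r1 rm1 h2 h3 Az Az1 Az2.
by rewrite Yc'1.
Qed.

Lemma G1 r : 1 <= r -> r + 3 <= m -> forall y, 1 <= y -> y <= n -> D (r+1) y = false ->
  cnt (D (r+2)) y <= cnt (D r) y.
Proof.
move=> r1 rm; elim/ltn_ind => y IH y1 yn By.
have r1' : 1 <= r + 1 by lia.
have rm1 : r + 1 + 2 <= m by lia.
have rm2 : r + 2 <= m by lia.
have Cy : D (r+2) y.
  have yb : 1 <= y <= n by apply/andP; split; lia.
  have rm' : r + 1 + 1 <= m by lia.
  have [_ _ _ _] := P1 r1' rm' yb By.
  by have -> : r + 1 + 1 = r + 2 by lia.
case: (classic (exists z, 1 <= z < y /\ D (r+1) z = false)) => [hex|hno].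
- have [b' [/andP[b'1 b'y] Bb' hlast]] := last_false hex.
  have IH' := IH b' b'y b'1 (ltnW (leq_trans b'y yn)) Bb'.
  have hC : cnt (D (r+2)) y <= cnt (D (r+2)) b' + 1.
    apply: cnt_le1; first lia.
    move=> z z' bz zz z'y Cz Cz'.
    have e2 : r + 1 + 1 = r + 2 by lia.
    rewrite -e2 in Cz Cz'.
    have z1 : 1 <= z by lia.
    have [w [/andP[zw wz'] Bw]] := upper_gap r1' rm1 zz (leq_trans z'y yn) (or_intror (conj z1 Cz)) Cz'.
    have : D (r+1) w by apply: hlast; apply/andP; split; lia.
    by rewrite Bw.
  have hA : cnt (D r) b' + 1 <= cnt (D r) y.
    have [w [/andP[bw wy] Aw]] := upper_gap r1 rm2 b'y yn (or_intror (conj b'1 Bb')) By.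
    apply: (@cnt_ge _ _ w) => //; apply/andP; split; lia.
  lia.
- case: (classic (exists z, 1 <= z < y /\ D (r+2) z = false)) => [[z [/andP[z1 zy] Cz]]|hno2].
  + have hC : cnt (D (r+2)) y <= cnt (D (r+2)) 0 + 1.
      apply: cnt_le1 => // z1' z' bz zz z'y Cz1 Cz'.
      have e2 : r + 1 + 1 = r + 2 by lia.
      rewrite -e2 in Cz1 Cz'.
      have z1'' : 1 <= z1' by lia.
      have [w [/andP[zw wz'] Bw]] := upper_gap r1' rm1 zz (leq_trans z'y yn) (or_intror (conj z1'' Cz1)) Cz'.
      apply: hno; exists w; split => //; apply/andP; split; lia.
    have zb : 1 <= z <= n by apply/andP; split; lia.
    have r2 : 1 <= r + 2 by lia.
    have rm3 : r + 2 + 1 <= m by lia.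
    have [z2 _ _ _ _] := P1 r2 rm3 zb Cz.
    have hA : cnt (D r) 0 + 1 <= cnt (D r) y.
      have y0 : 0 < y by lia.
      have y3 : 3 <= y by lia.
      have [w [/andP[bw wy] Aw]] := upper_gap r1 rm2 y0 yn (or_introl (conj erefl y3)) By.
      apply: (@cnt_ge _ _ w) => //; apply/andP; split; lia.
    move: hC hA; rewrite !cnt0; lia.
  + rewrite (@cnt_const _ 0 y) ?cnt0 //=.
    move=> z /andP[z0 zy]; case: (z =P y) => [->//|nzy].
    case E: (D (r+2) z) => //; exfalso; apply: hno2; exists z; split => //.
    apply/andP; split; lia.
Qed.

Lemma G2 r y : 1 <= r -> r + 3 <= m -> 1 <= y -> y + 2 <= n ->
  D r y = false -> D (r+2) (y+1) = false -> D (r+1) (y+2) = false ->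
  cnt (D (r+2)) y + 1 <= cnt (D r) y.
Proof.
move=> r1 rm y1 yn Ay Cy1 By2.
have r1' : 1 <= r + 1 by lia.
have rm1 : r + 1 + 2 <= m by lia.
have rm2 : r + 2 <= m by lia.
have e2 : r + 1 + 1 = r + 2 by lia.
have By : D (r+1) y.
  have yb : 1 <= y <= n by apply/andP; split; lia.
  have rm0 : r + 1 <= m by lia.
  by have [_ _ _ _ ] := P1 r1 rm0 yb Ay.
have By1 : D (r+1) (y+1).
  apply: full_above => //; [lia | apply/andP; split; lia | by rewrite e2].
have noC : forall b', b' < y -> (forall w, b' < w < y -> D (r+1) w) ->
    forall z, b' < z <= y -> D (r+2) z.
  move=> b' b'y hl z /andP[bz zy]; case E: (D (r+2) z) => //; exfalso.
  rewrite -e2 in E Cy1.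
  have zy1 : z < y + 1 by lia.
  have yn1 : y + 1 <= n by lia.
  have z1 : 1 <= z by lia.
  have [w [/andP[zw wz'] Bw]] := upper_gap r1' rm1 zy1 yn1 (or_intror (conj z1 E)) Cy1.
  case: (w =P y) => [ew|nw]; first by rewrite ew By in Bw.
  have : D (r+1) w by apply: hl; apply/andP; split; lia.
  by rewrite Bw.
case: (classic (exists z, 1 <= z < y /\ D (r+1) z = false)) => [hex|hno].
- have [b' [/andP[b'1 b'y] Bb' hlast]] := last_false hex.
  have yn' : y <= n by lia.
  have h1 := G1 r1 rm b'1 (ltnW (leq_trans b'y yn')) Bb'.
  have h2 : cnt (D (r+2)) y = cnt (D (r+2)) b' by apply: cnt_const; [lia | exact: noC].
  have h3 : cnt (D r) b' + 1 <= cnt (D r) y by apply: (@cnt_ge _ _ y) => //; apply/andP; split; lia.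
  have := h1; rewrite h2; lia.
- have h2 : cnt (D (r+2)) y = cnt (D (r+2)) 0.
    apply: cnt_const => //; apply: noC => // w /andP[w0 wy]; case E: (D (r+1) w) => //.
    by exfalso; apply: hno; exists w; split => //; apply/andP; split; lia.
  have h3 : cnt (D r) 0 + 1 <= cnt (D r) y by apply: (@cnt_ge _ _ y) => //; apply/andP; split; lia.
  move: h2 h3; rewrite cnt0 => ->; lia.
Qed.

Lemma bb (z : nat) : 1 <= z -> z <= n -> 1 <= z <= n.
Proof. by move=> a b; apply/andP. Qed.

Lemma col1 r : 1 <= r -> r + 1 <= m -> 1 <= n -> D r 1.
Proof.
move=> r1 rm n1; case E: (D r 1) => //.
have b : 1 <= 1 <= n by [].
by have [] := P1 r1 rm b E.
Qed.

Lemma dens_step r : 1 <= r -> r + 3 <= m ->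
  (forall y, y <= n -> 3 * (cnt (D r) y + cnt (D (r+1)) y) <= 2 * y) ->
  forall y, y <= n -> 3 * (cnt (D (r+1)) y + cnt (D (r+2)) y) <= 2 * y.
Proof.
move=> r1 rm LA; elim/ltn_ind => y IH yn.
have r1' : 1 <= r + 1 by slia.
have r2 : 1 <= r + 2 by slia.
have rmB : r + 1 + 1 <= m by slia.
have rmC : r + 2 + 1 <= m by slia.
have e2 : r + 1 + 1 = r + 2 by slia.
have disj : forall z, 1 <= z <= n -> D (r+1) z || D (r+2) z.
  move=> z zb; case E: (D (r+1) z) => //=.
  by have [_ _ _ _] := P1 r1' rmB zb E; rewrite e2.
have isoB : forall z, 1 <= z <= n -> D (r+1) z = false -> D (r+1) z.+1 /\ D (r+1) z.-1 /\ 2 <= z.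
  move=> z zb E; have [h1 _ h2 h3 _] := P1 r1' rmB zb E.
  have -> : z.+1 = z + 1 by slia.
  have -> : z.-1 = z - 1 by slia.
  by split => //; split.
have isoC : forall z, 1 <= z <= n -> D (r+2) z = false -> D (r+2) z.+1 /\ D (r+2) z.-1 /\ 2 <= z.
  move=> z zb E; have [h1 _ h2 h3 _] := P1 r2 rmC zb E.
  have -> : z.+1 = z + 1 by slia.
  have -> : z.-1 = z - 1 by slia.
  by split => //; split.
case: y IH yn => [|[|[|k]]] IH yn; first by rewrite !cnt0.
- have n1 : 1 <= n by slia.
  by rewrite !cntS !cnt0 (col1 r1' rmB n1) (col1 r2 rmC n1).
- have n1 : 1 <= n by slia.
  rewrite !cntS !cnt0 (col1 r1' rmB n1) (col1 r2 rmC n1) /=.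
  move: (disj 2 (@bb 2 ltac:(slia) ltac:(slia))); case: (D (r+1) 2); case: (D (r+2) 2) => //= _; slia.
have IH1 := IH k.+2 (ltnSn _) (ltnW yn).
have IH2 := IH k.+1 ltac:(slia) ltac:(slia).
have IH3 := IH k ltac:(slia) ltac:(slia).
have hBCB : D (r+1) k.+3 = false -> D (r+2) k.+2 = false -> D (r+1) k.+1 = false ->
    3 * (cnt (D (r+1)) k.+3 + cnt (D (r+2)) k.+3) <= 2 * k.+3.
  move=> b3 c2 b1.
  have h1 := @G1 r r1 rm k.+3 ltac:(slia) yn b3.
  have h2 := LA k.+3 yn.
  slia.
have hCBC : D (r+2) k.+3 = false -> D (r+1) k.+2 = false -> D (r+2) k.+1 = false ->
    3 * (cnt (D (r+1)) k.+3 + cnt (D (r+2)) k.+3) <= 2 * k.+3.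
  move=> c3 b2 c1.
  have [c2 [_ k1]] := isoC k.+1 (@bb k.+1 ltac:(slia) ltac:(slia)) c1.
  have bk1 : D (r+1) k.+1.
    apply: full_above; [slia | slia | apply: bb; slia | by rewrite e2].
  have bk3 : D (r+1) k.+3.
    apply: full_above; [slia | slia | apply: bb; slia | by rewrite e2].
  have kb : 1 <= k.+2 <= n by apply: bb; slia.
  have [[_ [_ hC]]|[_ [_ hC]]|[_ [a1 [a2 a3]]]] := P3 r1' rmB kb b2.
  - have e' : k.+2 - 1 = k.+1 by slia.
    by move: hC; rewrite e2 e' c1.
  - have e' : k.+2 + 1 = k.+3 by slia.
    by move: hC; rewrite e2 e' c3.
  have ea : r + 1 - 1 = r by slia.
  have eb : k.+2 - 1 = k.+1 by slia.
  have ec : k.+2 + 1 = k.+3 by slia.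
  rewrite ea eb ec in a1 a2 a3.
  have ak : D r k = false.
    case E: (D r k) => //.
    have rm0 : r + 1 <= m by slia.
    have := P2 r1 rm0 (_ : 2 <= k.+1) (_ : k.+1 + 1 <= n) a1.
    have ed : k.+1 - 1 = k by slia.
    have ee : k.+1 + 1 = k.+2 by slia.
    rewrite ed ee E a2 => /(_ ltac:(slia) ltac:(slia) erefl erefl).
    by move=> h; move: bk1; rewrite h.
  have kk1 : 1 <= k by slia.
  have kk2 : k + 2 <= n by slia.
  have h3 := @G2 r k r1 rm kk1 kk2 ak.
  have ek1 : k + 1 = k.+1 by slia.
  have ek2 : k + 2 = k.+2 by slia.
  rewrite ek1 ek2 in h3; have {h3} h3 := h3 c1 b2.
  have kn : k <= n by slia.
  have h4 := LA k kn.
  have eB : cnt (D (r+1)) k.+3 = cnt (D (r+1)) k + ~~ D (r+1) k.+1 + ~~ D (r+1) k.+2 + ~~ D (r+1) k.+3 := erefl.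
  have eC : cnt (D (r+2)) k.+3 = cnt (D (r+2)) k + ~~ D (r+2) k.+1 + ~~ D (r+2) k.+2 + ~~ D (r+2) k.+3 := erefl.
  rewrite eB eC bk1 bk3 b2 c1 c3 c2 /=.
  slia.
have eB3 : cnt (D (r+1)) k.+3 = cnt (D (r+1)) k + ~~ D (r+1) k.+1 + ~~ D (r+1) k.+2 + ~~ D (r+1) k.+3 := erefl.
have eB2 : cnt (D (r+1)) k.+2 = cnt (D (r+1)) k + ~~ D (r+1) k.+1 + ~~ D (r+1) k.+2 := erefl.
have eB1 : cnt (D (r+1)) k.+1 = cnt (D (r+1)) k + ~~ D (r+1) k.+1 := erefl.
have eC3 : cnt (D (r+2)) k.+3 = cnt (D (r+2)) k + ~~ D (r+2) k.+1 + ~~ D (r+2) k.+2 + ~~ D (r+2) k.+3 := erefl.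
have eC2 : cnt (D (r+2)) k.+2 = cnt (D (r+2)) k + ~~ D (r+2) k.+1 + ~~ D (r+2) k.+2 := erefl.
have eC1 : cnt (D (r+2)) k.+1 = cnt (D (r+2)) k + ~~ D (r+2) k.+1 := erefl.
rewrite eB1 eC1 in IH2; rewrite eB2 eC2 in IH1; rewrite eB3 eC3 in hBCB hCBC *.
have d1 := disj k.+1 (@bb k.+1 ltac:(slia) ltac:(slia)).
have d2 := disj k.+2 (@bb k.+2 ltac:(slia) ltac:(slia)).
have d3 := disj k.+3 (@bb k.+3 ltac:(slia) ltac:(slia)).
have iB1 : D (r+1) k.+1 || D (r+1) k.+2.
  case E: (D (r+1) k.+1) => //=; by case: (isoB k.+1 (@bb k.+1 ltac:(slia) ltac:(slia)) E).
have iB2 : D (r+1) k.+2 || D (r+1) k.+3.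
  case E: (D (r+1) k.+2) => //=; by case: (isoB k.+2 (@bb k.+2 ltac:(slia) ltac:(slia)) E).
have iC1 : D (r+2) k.+1 || D (r+2) k.+2.
  case E: (D (r+2) k.+1) => //=; by case: (isoC k.+1 (@bb k.+1 ltac:(slia) ltac:(slia)) E).
have iC2 : D (r+2) k.+2 || D (r+2) k.+3.
  case E: (D (r+2) k.+2) => //=; by case: (isoC k.+2 (@bb k.+2 ltac:(slia) ltac:(slia)) E).
case: (boolP [&& ~~ D (r+1) k.+3, ~~ D (r+2) k.+2 & ~~ D (r+1) k.+1]) => [/and3P[h1 h2 h3]|nB].
  by apply: hBCB; apply: negbTE.
case: (boolP [&& ~~ D (r+2) k.+3, ~~ D (r+1) k.+2 & ~~ D (r+2) k.+1]) => [/and3P[h1 h2 h3]|nC].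
  by apply: hCBC; apply: negbTE.
have a1 : ~~ D (r+1) k.+1 + ~~ D (r+2) k.+1 <= 1 by move: d1; case: (D (r+1) k.+1); case: (D (r+2) k.+1).
have a2 : ~~ D (r+1) k.+2 + ~~ D (r+2) k.+2 <= 1 by move: d2; case: (D (r+1) k.+2); case: (D (r+2) k.+2).
have a3 : ~~ D (r+1) k.+3 + ~~ D (r+2) k.+3 <= 1 by move: d3; case: (D (r+1) k.+3); case: (D (r+2) k.+3).
have a4 : ~~ D (r+1) k.+1 + ~~ D (r+1) k.+2 <= 1 by move: iB1; case: (D (r+1) k.+1); case: (D (r+1) k.+2).
have a5 : ~~ D (r+1) k.+2 + ~~ D (r+1) k.+3 <= 1 by move: iB2; case: (D (r+1) k.+2); case: (D (r+1) k.+3).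
have a6 : ~~ D (r+2) k.+1 + ~~ D (r+2) k.+2 <= 1 by move: iC1; case: (D (r+2) k.+1); case: (D (r+2) k.+2).
have a7 : ~~ D (r+2) k.+2 + ~~ D (r+2) k.+3 <= 1 by move: iC2; case: (D (r+2) k.+2); case: (D (r+2) k.+3).
have a8 : ~~ D (r+1) k.+3 + ~~ D (r+2) k.+2 + ~~ D (r+1) k.+1 <= 2
  by move: nB; case: (D (r+1) k.+3); case: (D (r+2) k.+2); case: (D (r+1) k.+1).
have a9 : ~~ D (r+2) k.+3 + ~~ D (r+1) k.+2 + ~~ D (r+2) k.+1 <= 2
  by move: nC; case: (D (r+2) k.+3); case: (D (r+1) k.+2); case: (D (r+2) k.+1).
move: a1 a2 a3 a4 a5 a6 a7 a8 a9 IH1 IH2 IH3.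
move: (nat_of_bool (~~ D (r+1) k.+1)) (nat_of_bool (~~ D (r+1) k.+2)) (nat_of_bool (~~ D (r+1) k.+3))
      (nat_of_bool (~~ D (r+2) k.+1)) (nat_of_bool (~~ D (r+2) k.+2)) (nat_of_bool (~~ D (r+2) k.+3))
      (cnt (D (r+1)) k) (cnt (D (r+2)) k) => x1 x2 x3 y1 y2 y3 sb sc.
clear; lia.
Qed.


End Dens.


Section Top.
Variables (m n : nat) (D : config).
Hypothesis P1 : forall r b, 1 <= r -> r + 1 <= m -> 1 <= b <= n -> D r b = false ->
  [/\ 2 <= b, b + 1 <= n, D r (b-1), D r (b+1) & D (r+1) b].
Hypothesis P2 : forall r b, 1 <= r -> r + 1 <= m -> 2 <= b -> b + 1 <= n ->
  D r b -> D r (b-1) -> D r (b+1) -> D (r+1) b = false.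
Hypothesis P3 : forall r b, 1 <= r -> r + 1 <= m -> 1 <= b <= n -> D r b = false ->
  [\/ 3 <= b /\ D r (b-2) /\ D (r+1) (b-1),
      b + 2 <= n /\ D r (b+2) /\ D (r+1) (b+1) |
      2 <= r /\ D (r-1) (b-1) /\ D (r-1) b /\ D (r-1) (b+1)].

Lemma dens_top : 3 <= m -> forall y, y <= n ->
  3 * (cnt (D 1) y + cnt (D 2) y) <= 2 * y /\
  (y + 2 <= n -> D 1 y.+1 = false -> D 2 y.+2 = false ->
     3 * (cnt (D 1) y + cnt (D 2) y) + 3 <= 2 * y).
Proof.
move=> m3; elim/ltn_ind => y IH yn.
have r1 : 1 <= 1 by [].
have rm1 : 1 + 1 <= m by slia.
have r2 : 1 <= 2 by [].
have rm2 : 2 + 1 <= m by slia.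
have disj : forall z, 1 <= z <= n -> D 1 z || D 2 z.
  move=> z zb; case E: (D 1 z) => //=.
  by have [_ _ _ _] := P1 r1 rm1 zb E.
have isoB : forall z, 1 <= z <= n -> D 1 z = false -> D 1 z.+1 /\ D 1 z.-1 /\ 2 <= z.
  move=> z zb E; have [h1 _ h2 h3 _] := P1 r1 rm1 zb E.
  have -> : z.+1 = z + 1 by slia.
  have -> : z.-1 = z - 1 by slia.
  by split => //; split.
have isoC : forall z, 1 <= z <= n -> D 2 z = false -> D 2 z.+1 /\ D 2 z.-1 /\ 2 <= z.
  move=> z zb E; have [h1 _ h2 h3 _] := P1 r2 rm2 zb E.
  have -> : z.+1 = z + 1 by slia.
  have -> : z.-1 = z - 1 by slia.
  by split => //; split.
have part2 : y + 2 <= n -> D 1 y.+1 = false -> D 2 y.+2 = false ->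
     3 * (cnt (D 1) y + cnt (D 2) y) + 3 <= 2 * y.
  move=> y2n b1 c2.
  have yb : 1 <= y.+1 <= n by apply: bb; slia.
  have [[y3 [By1 Cy]]|[_ [_ hC]]|[hr _]] := P3 r1 rm1 yb b1; last by [].
  - have e1 : y.+1 - 2 = y.-1 by slia.
    have e2 : y.+1 - 1 = y by slia.
    rewrite e1 e2 /= in By1 Cy.
    have [_ [By _]] := isoB y.+1 yb b1.
    rewrite /= in By; clear e1 e2.
    case: y IH yn y2n b1 c2 yb y3 By1 Cy By => [|[|[|k]]] IH yn y2n b1 c2 yb y3 By1 Cy By; try slia.
    + (* y = 2 *)
      have n1 : 1 <= n by slia.
      by rewrite !cntS !cnt0 (col1 P1 r1 rm1 n1) (col1 P1 r2 rm2 n1) Cy By.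
    + have eB : cnt (D 1) k.+3 = cnt (D 1) k.+1 + ~~ D 1 k.+2 + ~~ D 1 k.+3 := erefl.
      have eC : cnt (D 2) k.+3 = cnt (D 2) k.+1 + ~~ D 2 k.+2 + ~~ D 2 k.+3 := erefl.
      rewrite eB eC By1 By Cy /=.
      case Ck2 : (D 2 k.+2).
      * have [h _] := IH k.+1 ltac:(slia) ltac:(slia).
        rewrite /=; slia.
      * have [Ck1 [_ _]] : D 2 k.+1 /\ True /\ True.
          by have [_ [h _]] := isoC k.+2 (@bb n k.+2 ltac:(slia) ltac:(slia)) Ck2.
        have eB' : cnt (D 1) k.+1 = cnt (D 1) k + ~~ D 1 k.+1 := erefl.
        have eC' : cnt (D 2) k.+1 = cnt (D 2) k + ~~ D 2 k.+1 := erefl.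
        rewrite eB' eC' Ck1 /=.
        case Bk1 : (D 1 k.+1).
        - have [h _] := IH k ltac:(slia) ltac:(slia).
          rewrite /=; slia.
        - have [_ h] := IH k ltac:(slia) ltac:(slia).
          have {h} h := h ltac:(slia) Bk1 Ck2.
          rewrite /=; slia.
  - have e : y.+1 + 1 = y.+2 by slia.
    by rewrite e c2 in hC.
split => //.
case: y IH yn part2 => [|[|[|k]]] IH yn _.
- by rewrite !cnt0.
- have n1 : 1 <= n by slia.
  by rewrite !cntS !cnt0 (col1 P1 r1 rm1 n1) (col1 P1 r2 rm2 n1).
- have n1 : 1 <= n by slia.
  rewrite !cntS !cnt0 (col1 P1 r1 rm1 n1) (col1 P1 r2 rm2 n1) /=.
  move: (disj 2 (@bb n 2 ltac:(slia) ltac:(slia))); case: (D 1 2); case: (D 2 2) => //= _; slia.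
have [IH1 _] := IH k.+2 ltac:(slia) ltac:(slia).
have [IH2 _] := IH k.+1 ltac:(slia) ltac:(slia).
have [IH3 IH3'] := IH k ltac:(slia) ltac:(slia).
have eB3 : cnt (D 1) k.+3 = cnt (D 1) k + ~~ D 1 k.+1 + ~~ D 1 k.+2 + ~~ D 1 k.+3 := erefl.
have eB2 : cnt (D 1) k.+2 = cnt (D 1) k + ~~ D 1 k.+1 + ~~ D 1 k.+2 := erefl.
have eB1 : cnt (D 1) k.+1 = cnt (D 1) k + ~~ D 1 k.+1 := erefl.
have eC3 : cnt (D 2) k.+3 = cnt (D 2) k + ~~ D 2 k.+1 + ~~ D 2 k.+2 + ~~ D 2 k.+3 := erefl.
have eC2 : cnt (D 2) k.+2 = cnt (D 2) k + ~~ D 2 k.+1 + ~~ D 2 k.+2 := erefl.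
have eC1 : cnt (D 2) k.+1 = cnt (D 2) k + ~~ D 2 k.+1 := erefl.
rewrite eB1 eC1 in IH2; rewrite eB2 eC2 in IH1; rewrite eB3 eC3.
have d1 := disj k.+1 (@bb n k.+1 ltac:(slia) ltac:(slia)).
have d2 := disj k.+2 (@bb n k.+2 ltac:(slia) ltac:(slia)).
have d3 := disj k.+3 (@bb n k.+3 ltac:(slia) ltac:(slia)).
have iB1 : D 1 k.+1 || D 1 k.+2.
  case E: (D 1 k.+1) => //=; by case: (isoB k.+1 (@bb n k.+1 ltac:(slia) ltac:(slia)) E).
have iB2 : D 1 k.+2 || D 1 k.+3.
  case E: (D 1 k.+2) => //=; by case: (isoB k.+2 (@bb n k.+2 ltac:(slia) ltac:(slia)) E).
have iC1 : D 2 k.+1 || D 2 k.+2.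
  case E: (D 2 k.+1) => //=; by case: (isoC k.+1 (@bb n k.+1 ltac:(slia) ltac:(slia)) E).
have iC2 : D 2 k.+2 || D 2 k.+3.
  case E: (D 2 k.+2) => //=; by case: (isoC k.+2 (@bb n k.+2 ltac:(slia) ltac:(slia)) E).
case: (boolP [&& ~~ D 1 k.+3, ~~ D 2 k.+2 & ~~ D 1 k.+1]) => [/and3P[h1 h2 h3]|nB].
  have b3 := negbTE h1; have c2 := negbTE h2; have b1 := negbTE h3.
  have {IH3'} h := IH3' ltac:(slia) b1 c2.
  have bk2 : D 1 k.+2 by move: iB1; rewrite b1.
  have ck1 : D 2 k.+1 by move: iC1; rewrite c2 orbF.
  have ck3 : D 2 k.+3 by move: iC2; rewrite c2.
  rewrite b3 b1 bk2 ck1 ck3 c2 /=; slia.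
case: (boolP [&& ~~ D 2 k.+3, ~~ D 1 k.+2 & ~~ D 2 k.+1]) => [/and3P[h1 h2 h3]|nC].
  have c3 := negbTE h1; have b2 := negbTE h2; have c1 := negbTE h3.
  have kb : 1 <= k.+2 <= n by apply: bb; slia.
  have [[_ [_ hC]]|[_ [_ hC]]|[hr _]] := P3 r1 rm1 kb b2; last by [].
  - have e' : k.+2 - 1 = k.+1 by slia.
    by move: hC; rewrite e' c1.
  - have e' : k.+2 + 1 = k.+3 by slia.
    by move: hC; rewrite e' c3.
have a1 : ~~ D 1 k.+1 + ~~ D 2 k.+1 <= 1 by move: d1; case: (D 1 k.+1); case: (D 2 k.+1).
have a2 : ~~ D 1 k.+2 + ~~ D 2 k.+2 <= 1 by move: d2; case: (D 1 k.+2); case: (D 2 k.+2).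
have a3 : ~~ D 1 k.+3 + ~~ D 2 k.+3 <= 1 by move: d3; case: (D 1 k.+3); case: (D 2 k.+3).
have a4 : ~~ D 1 k.+1 + ~~ D 1 k.+2 <= 1 by move: iB1; case: (D 1 k.+1); case: (D 1 k.+2).
have a5 : ~~ D 1 k.+2 + ~~ D 1 k.+3 <= 1 by move: iB2; case: (D 1 k.+2); case: (D 1 k.+3).
have a6 : ~~ D 2 k.+1 + ~~ D 2 k.+2 <= 1 by move: iC1; case: (D 2 k.+1); case: (D 2 k.+2).
have a7 : ~~ D 2 k.+2 + ~~ D 2 k.+3 <= 1 by move: iC2; case: (D 2 k.+2); case: (D 2 k.+3).
have a8 : ~~ D 1 k.+3 + ~~ D 2 k.+2 + ~~ D 1 k.+1 <= 2
  by move: nB; case: (D 1 k.+3); case: (D 2 k.+2); case: (D 1 k.+1).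
have a9 : ~~ D 2 k.+3 + ~~ D 1 k.+2 + ~~ D 2 k.+1 <= 2
  by move: nC; case: (D 2 k.+3); case: (D 1 k.+2); case: (D 2 k.+1).
move: a1 a2 a3 a4 a5 a6 a7 a8 a9 IH1 IH2 IH3.
move: (nat_of_bool (~~ D 1 k.+1)) (nat_of_bool (~~ D 1 k.+2)) (nat_of_bool (~~ D 1 k.+3))
      (nat_of_bool (~~ D 2 k.+1)) (nat_of_bool (~~ D 2 k.+2)) (nat_of_bool (~~ D 2 k.+3))
      (cnt (D 1) k) (cnt (D 2) k) => x1 x2 x3 y1 y2 y3 sb sc.
clear; lia.
Qed.

End Top.


Section Main.
Variables (m n : nat) (D : config).
Hypothesis P1 : forall r b, 1 <= r -> r + 1 <= m -> 1 <= b <= n -> D r b = false ->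
  [/\ 2 <= b, b + 1 <= n, D r (b-1), D r (b+1) & D (r+1) b].
Hypothesis P2 : forall r b, 1 <= r -> r + 1 <= m -> 2 <= b -> b + 1 <= n ->
  D r b -> D r (b-1) -> D r (b+1) -> D (r+1) b = false.
Hypothesis P3 : forall r b, 1 <= r -> r + 1 <= m -> 1 <= b <= n -> D r b = false ->
  [\/ 3 <= b /\ D r (b-2) /\ D (r+1) (b-1),
      b + 2 <= n /\ D r (b+2) /\ D (r+1) (b+1) |
      2 <= r /\ D (r-1) (b-1) /\ D (r-1) b /\ D (r-1) (b+1)].

Lemma chain r : 1 <= r -> r + 2 <= m -> forall y, y <= n ->
  3 * (cnt (D r) y + cnt (D (r+1)) y) <= 2 * y.
Proof.
elim: r => [//|r IH] r1 rm.
case: r IH r1 rm => [|r] IH r1 rm.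
  have m3 : 3 <= m by slia.
  by move=> y yn; have [h _] := dens_top P1 P3 m3 yn.
have a1 : 1 <= r.+1 by [].
have a2 : r.+1 + 3 <= m by slia.
have h := dens_step P1 P2 P3 a1 a2 (IH ltac:(slia) ltac:(slia)).
move=> y yn; have := h y yn.
have -> : r.+1 + 1 = r.+2 by slia.
by have -> : r.+1 + 2 = r.+2 + 1 by slia.
Qed.

Lemma mainL i t : 1 <= i -> i + 2 <= m -> 3 %| n ->
  (forall l, 1 <= l <= n -> D (i+2) l = (l %% 3 != 2)) ->
  3 * t + 2 <= n -> D i (3 * t + 1) = false -> False.
Proof.
move=> i1 im n3 pat tn At.
have L := chain i1 im.
have i1' : 1 <= i + 1 by slia.
have im1 : i + 1 + 1 <= m by slia.
have e2 : i + 1 + 1 = i + 2 by slia.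
have Bsome : forall s, 1 <= s -> 3 * s + 2 <= n ->
    D (i+1) (3 * s) = false \/ D (i+1) (3 * s + 1) = false.
  move=> s s1 sn.
  case E1: (D (i+1) (3 * s)); case E2: (D (i+1) (3 * s + 1)); try by [left | right].
  exfalso.
  have Bm : D (i+1) (3 * s - 1).
    apply: (full_above P1 i1' im1); first by apply: bb; slia.
    rewrite e2 pat; last by apply: bb; slia.
    by apply/negbTE; rewrite negbK; apply/eqP; slia.
  have b2 : 2 <= 3 * s by slia.
  have b3 : 3 * s + 1 <= n by slia.
  have em : 3 * s - 1 = 3 * s - 1 by [].
  have := P2 i1' im1 b2 b3 E1 Bm E2.
  rewrite e2 pat; last by apply: bb; slia.
  by move/negbT; rewrite negbK => /eqP; slia.
have beta : forall s, 1 <= s -> 3 * s + 2 <= n ->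
    exists c, [/\ 3 * s <= c, c <= 3 * s + 1 & D (i+1) c = false].
  move=> s s1 sn; case: (Bsome s s1 sn) => h.
  - by exists (3 * s); split => //; slia.
  - by exists (3 * s + 1); split => //; slia.
have t0 : 3 * t <= n by slia.
have cntB : forall s, s <= t -> s <= cnt (D (i+1)) (3 * s + 1).
  elim=> [|s IH] st; first by [].
  have [c [c1 c2 Bc]] := beta s.+1 ltac:(slia) ltac:(slia).
  have h1 := IH ltac:(slia).
  have h2 : cnt (D (i+1)) (3 * s + 1) + 1 <= cnt (D (i+1)) (3 * s.+1 + 1).
    by apply: (@cnt_ge _ _ c) => //; apply/andP; split; slia.
  slia.
have cntA : forall s, s <= t -> s <= cnt (D i) (3 * s).
  elim=> [|s IH] st; first by [].
  have [c' [c1 c2 Bc']] := beta s.+1 ltac:(slia) ltac:(slia).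
  have [z [/andP[z1 z2] Az]] : exists z, 3 * s < z < c' /\ D i z = false.
    case: s IH st c1 c2 Bc' => [|s] IH st c1 c2 Bc'.
    - have c'3 : 3 <= c' by slia.
      have c'n : c' <= n by slia.
      have c'0 : 0 < c' by slia.
      have [z [hz Az]] := upper_gap P1 P2 i1 im c'0 c'n (or_introl (conj erefl c'3)) Bc'.
      by exists z.
    - have [c [d1 d2 Bc]] := beta s.+1 ltac:(slia) ltac:(slia).
      have cc : c < c' by slia.
      have c'n : c' <= n by slia.
      have c1' : 1 <= c by slia.
      have [z [/andP[hz1 hz2] Az]] := upper_gap P1 P2 i1 im cc c'n (or_intror (conj c1' Bc)) Bc'.
      by exists z; split => //; apply/andP; split; slia.
  have h1 := IH ltac:(slia).
  have h2 : cnt (D i) (3 * s) + 1 <= cnt (D i) (3 * s.+1).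
    by apply: (@cnt_ge _ _ z) => //; apply/andP; split; slia.
  slia.
have hA : cnt (D i) (3 * t) + 1 <= cnt (D i) (3 * t + 1).
  by apply: (@cnt_ge _ _ (3 * t + 1)) => //; apply/andP; split; slia.
have h1 := cntA t (leqnn t).
have h2 := cntB t (leqnn t).
have h3 := L (3 * t + 1) ltac:(slia).
slia.
Qed.

End Main.


Definition mir (n : nat) (D : config) : config := fun r b => D r (n.+1 - b).

Section Mirror.
Variables (m n : nat) (D : config).
Hypothesis P1 : forall r b, 1 <= r -> r + 1 <= m -> 1 <= b <= n -> D r b = false ->
  [/\ 2 <= b, b + 1 <= n, D r (b-1), D r (b+1) & D (r+1) b].
Hypothesis P2 : forall r b, 1 <= r -> r + 1 <= m -> 2 <= b -> b + 1 <= n ->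
  D r b -> D r (b-1) -> D r (b+1) -> D (r+1) b = false.
Hypothesis P3 : forall r b, 1 <= r -> r + 1 <= m -> 1 <= b <= n -> D r b = false ->
  [\/ 3 <= b /\ D r (b-2) /\ D (r+1) (b-1),
      b + 2 <= n /\ D r (b+2) /\ D (r+1) (b+1) |
      2 <= r /\ D (r-1) (b-1) /\ D (r-1) b /\ D (r-1) (b+1)].

Lemma mP1 r b : 1 <= r -> r + 1 <= m -> 1 <= b <= n -> mir n D r b = false ->
  [/\ 2 <= b, b + 1 <= n, mir n D r (b-1), mir n D r (b+1) & mir n D (r+1) b].
Proof.
move=> r1 rm /andP[b1 bn]; rewrite /mir => E.
have bb' : 1 <= n.+1 - b <= n by apply/andP; split; slia.
have [h1 h2 h3 h4 h5] := P1 r1 rm bb' E.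
have e1 : n.+1 - (b - 1) = n.+1 - b + 1 by slia.
have e2 : n.+1 - (b + 1) = n.+1 - b - 1 by slia.
by rewrite e1 e2; split => //; slia.
Qed.

Lemma mP2 r b : 1 <= r -> r + 1 <= m -> 2 <= b -> b + 1 <= n ->
  mir n D r b -> mir n D r (b-1) -> mir n D r (b+1) -> mir n D (r+1) b = false.
Proof.
move=> r1 rm b2 bn; rewrite /mir => h0 h1 h2.
have e1 : n.+1 - (b - 1) = n.+1 - b + 1 by slia.
have e2 : n.+1 - (b + 1) = n.+1 - b - 1 by slia.
rewrite e1 e2 in h1 h2.
by apply: P2 => //; slia.
Qed.

Lemma mP3 r b : 1 <= r -> r + 1 <= m -> 1 <= b <= n -> mir n D r b = false ->
  [\/ 3 <= b /\ mir n D r (b-2) /\ mir n D (r+1) (b-1),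
      b + 2 <= n /\ mir n D r (b+2) /\ mir n D (r+1) (b+1) |
      2 <= r /\ mir n D (r-1) (b-1) /\ mir n D (r-1) b /\ mir n D (r-1) (b+1)].
Proof.
move=> r1 rm /andP[b1 bn]; rewrite /mir => E.
have bb' : 1 <= n.+1 - b <= n by apply/andP; split; slia.
have [_ h2 _ _ _] := P1 r1 rm bb' E.
have e1 : n.+1 - (b - 1) = n.+1 - b + 1 by slia.
have e2 : n.+1 - (b + 1) = n.+1 - b - 1 by slia.
case: (P3 r1 rm bb' E) => [[h [ha hb]]|[h [ha hb]]|[h [ha [hb hc]]]].
- constructor 2.
  have e3 : n.+1 - (b + 2) = n.+1 - b - 2 by slia.
  by rewrite e3 e2; split; [slia | split].
- constructor 1.
  have e3 : n.+1 - (b - 2) = n.+1 - b + 2 by slia.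
  by rewrite e3 e1; split; [slia | split].
- constructor 3.
  by rewrite e1 e2; split; [slia | split => //; split].
Qed.

End Mirror.

Theorem mainTheorem14 (m n : nat) (C : config) (i : nat) :
  ES m n C -> 3 %| n -> 1 <= i -> i + 2 <= m ->
  (forall l, 1 <= l <= n -> C (i + 2) l = (l %% 3 != 2)) ->
  forall j, 1 <= j <= n -> C (i + 2) j = false -> C i j = false.
Proof.
move=> HES n3 i1 im pat j jb Cj.
have P1 := ES_P1 HES.
have P2 := ES_P2 HES.
have P3 := ES_P3 HES.
have j2 : j %% 3 = 2.
  by move: Cj; rewrite pat // => /negbFE/eqP.
have [K nK] : exists K, n = K * 3 by apply/dvdnP.
case E: (C i j) => //; exfalso.
have i1' : 1 <= i + 1 by slia.
have im1 : i + 1 + 1 <= m by slia.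
have e2 : i + 1 + 1 = i + 2 by slia.
have Bj : C (i+1) j by apply: (full_above P1 i1' im1) => //; rewrite e2.
have jj2 : 2 <= j by case/andP: jb => ? ?; slia.
have jn : j + 1 <= n by case/andP: jb => ? ?; slia.
have im0 : i + 1 <= m by slia.
have hP := P2 i j i1 im0 jj2 jn E.
case L: (C i (j-1)); case R: (C i (j+1)).
- by move: (hP L R); rewrite Bj.
- (* C i (j+1) = false: mirror *)
  have [t ht0] : exists t, n - j - 1 = 3 * t by exists ((n - j - 1) %/ 3); slia.
  have ht : n.+1 - (3 * t + 1) = j + 1 by case/andP: jb => ? ?; slia.
  have ht2 : 3 * t + 2 <= n by case/andP: jb => ? ?; slia.
  apply: (@mainL m n (mir n C) (mP1 P1) (mP2 P2) (mP3 P1 P3) i t i1 im n3 _ ht2).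
  + move=> l lb; rewrite /mir /= pat; last by case/andP: lb => ? ?; apply/andP; split; slia.
    congr negb; apply/eqP/eqP; case/andP: lb => ? ?; slia.
  + by rewrite /mir /= ht.
- have [t ht0] : exists t, j = 3 * t + 2 by exists (j %/ 3); slia.
  have ht : 3 * t + 1 = j - 1 by slia.
  have ht2 : 3 * t + 2 <= n by case/andP: jb => ? ?; slia.
  apply: (@mainL m n C P1 P2 P3 i t i1 im n3 pat ht2).
  by rewrite ht.
- have [t ht0] : exists t, j = 3 * t + 2 by exists (j %/ 3); slia.
  have ht : 3 * t + 1 = j - 1 by slia.
  have ht2 : 3 * t + 2 <= n by case/andP: jb => ? ?; slia.
  apply: (@mainL m n C P1 P2 P3 i t i1 im n3 pat ht2).
  by rewrite ht.
Qed.
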